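(* Let $\xi_1,\dots,\xi_n$ be independent real random variables with $\mathbf{E}\xi_i=0$, satisfying Bernstein's condition: there is a constant $\varepsilon>0$ such that $|\mathbf{E}\xi_i^k|\le \frac12 k!\,\varepsilon^{k-2}\mathbf{E}\xi_i^2$ for all $k\ge 3$ and $i=1,\dots,n$. Let $\sigma^2=\sum_{i=1}^n\mathbf{E}\xi_i^2$ and, for $0\le\lambda<\varepsilon^{-1}$, \[ \overline{\sigma}^2(\lambda)=\sum_{i=1}^n\Big(\frac{\mathbf{E}\xi_i^2e^{\lambda\xi_i}}{\mathbf{E}e^{\lambda\xi_i}}-\frac{(\mathbf{E}\xi_ie^{\lambda\xi_i})^2}{(\mathbf{E}e^{\lambda\xi_i})^2}\Big). \] Then for all $0\le\lambda<\varepsilon^{-1}$, \[ \frac{(1-\lambda\varepsilon)^2(1-3\lambda\varepsilon)}{(1-\lambda\varepsilon+6\lambda^2\varepsilon^2)^2}\sigma^2\le\overline{\sigma}^2(\lambda)\le\frac{\sigma^2}{(1-\lambda\varepsilon)^3}. \] *)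

(* Defs.v *)
From HB Require Import structures.
From mathcomp Require Import all_boot all_order all_algebra.
From mathcomp Require Import all_classical all_reals all_analysis.
Set Implicit Arguments. Unset Strict Implicit. Unset Printing Implicit Defensive.
Import Order.TTheory GRing.Theory Num.Theory.
Local Open Scope classical_set_scope.
Local Open Scope ring_scope.

(* Real-valued expectation of a real function f on the probability space:
   E f := \int f dP (as a real number; meaningful when f is integrable). *)
Definition Ef (d : measure_display) (T : measurableType d) (R : realType)
  (P : probability T R) (f : T -> R) : R :=
  fine (\int[P]_w (f w)%:E)%E.

Definition mutually_independent (d : measure_display) (T : measurableType d)
  (R : realType) (P : probability T R) (n : nat) (xi : 'I_n -> T -> R) : Prop :=
  forall (J : {set 'I_n}) (B : 'I_n -> set R),
    (forall j, j \in J -> measurable (B j)) ->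
    P (\bigcap_(j in [set j | j \in J]) (xi j @^-1` B j)) =
    (\prod_(j in J) P (xi j @^-1` B j))%E.

(* Main.v *)
Require Import Defs.
From HB Require Import structures.
From mathcomp Require Import all_boot all_order all_algebra.
From mathcomp Require Import all_classical all_reals all_analysis.
From mathcomp Require Import ring lra measurable_realfun.
Import Order.TTheory GRing.Theory Num.Theory numFieldNormedType.Exports.
Local Open Scope classical_set_scope.
Local Open Scope ring_scope.
Set Implicit Arguments. Unset Strict Implicit. Unset Printing Implicit Defensive.


Section Alg.
Variable R : realFieldType.
Implicit Types x : R.

Lemma geo_id x N : (1 - x) * \sum_(k < N) x ^+ k = 1 - x ^+ N.
Proof.
elim: N => [|N IH]; first by rewrite big_ord0 expr0; ring.
by rewrite big_ord_recr /= mulrDr IH exprS; ring.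
Qed.

Lemma geo_le x N : 0 <= x -> x < 1 -> \sum_(k < N) x ^+ k <= (1 - x)^-1.
Proof.
move=> x0 x1; have h : 0 < 1 - x by lra.
rewrite -[leRHS]mulr1 ler_pdivlMl // geo_id; have := exprn_ge0 N x0; lra.
Qed.

Definition qN x (N : nat) : R :=
  (N%:R + 1) * (N%:R + 2) - 2 * N%:R * (N%:R + 2) * x
  + N%:R * (N%:R + 1) * x ^+ 2.

Lemma tri_id x N : (1 - x) ^+ 3 * \sum_(k < N) ((k.+1 * k.+2)%:R * x ^+ k)
  = 2 - x ^+ N * qN x N.
Proof.
elim: N => [|N IH]; first by rewrite big_ord0 expr0 /qN; ring.
by rewrite big_ord_recr /= mulrDr IH /qN natrM [x ^+ N.+1]exprS !mulrS; ring.
Qed.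

Lemma qN_ge0 x N : 0 <= x -> x < 1 -> 0 <= qN x N.
Proof.
move=> x0 x1; rewrite /qN.
have hN : 0 <= N%:R :> R by [].
have e : (N%:R + 1) * (N%:R + 2) - 2 * N%:R * (N%:R + 2) * x
  + N%:R * (N%:R + 1) * x ^+ 2 = ((1 - x) * (N%:R * (N%:R + 3) - N%:R * (N%:R + 1) * x) + 2) :> R.
  by ring.
rewrite e.
have : 0 <= N%:R * (N%:R + 3) - N%:R * (N%:R + 1) * x :> R by nra.
nra.
Qed.

Lemma tri_le x N : 0 <= x -> x < 1 ->
  \sum_(k < N) ((k.+1 * k.+2)%:R * x ^+ k) <= 2 / (1 - x) ^+ 3.
Proof.
move=> x0 x1; have h : 0 < (1 - x) ^+ 3 by apply: exprn_gt0; lra.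
rewrite mulrC ler_pdivlMl // tri_id.
have := mulr_ge0 (exprn_ge0 N x0) (@qN_ge0 x N x0 x1); lra.
Qed.
End Alg.


Lemma final_alg (R : realFieldType) (lam eps A B C s m3 : R) :
  0 < eps -> 0 <= lam -> lam * eps < 1 ->
  1 <= A -> A <= 1 + lam ^+ 2 * s / (2 * (1 - lam * eps)) ->
  C <= s / (1 - lam * eps) ^+ 3 ->
  (forall t, 0 <= t ^+ 2 * A - 2 * t * B + C) ->
  s + lam * m3 <= C * A - B ^+ 2 ->
  `|m3| <= 3 * eps * s -> 0 <= s -> s <= 12 * eps ^+ 2 ->
  (1 - lam * eps) ^+ 2 * (1 - 3 * lam * eps) /
      (1 - lam * eps + 6 * lam ^+ 2 * eps ^+ 2) ^+ 2 * s
      <= C / A - B ^+ 2 / A ^+ 2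
  /\ C / A - B ^+ 2 / A ^+ 2 <= s / (1 - lam * eps) ^+ 3.
Proof.
move=> e0 l0 x1 A1 Aup Cup quad hD hm3 s0 s12.
set x := lam * eps.
have x0 : 0 <= x by rewrite mulr_ge0 // ltW.
have A0 : 0 < A by lra.
have C0 : 0 <= C.
  have := quad 0; rewrite (_ : (0:R) ^+ 2 * A - 2 * 0 * B + C = C) //; ring.
have V : C / A - B ^+ 2 / A ^+ 2 = (C * A - B ^+ 2) / A ^+ 2.
  by field; rewrite gt_eqF.
have D0 : 0 <= C * A - B ^+ 2.
  have := quad (B / A).
  have -> : (B / A) ^+ 2 * A - 2 * (B / A) * B + C = (C * A - B ^+ 2) / A.
    by field; rewrite gt_eqF.
  by rewrite pmulr_lge0 // invr_gt0.
split; last first.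
  apply: le_trans Cup; rewrite V.
  rewrite ler_pdivrMr ?exprn_gt0 //.
  have : C <= C * A by rewrite ler_peMr.
  have : C * A <= C * A ^+ 2 by rewrite expr2 mulrA ler_peMr // mulr_ge0 // ltW.
  have := sqr_ge0 B; lra.
rewrite V.
have [h3|h3] := lerP (1 - 3 * lam * eps) 0.
  apply: le_trans (divr_ge0 D0 (exprn_ge0 2 (ltW A0))).
  rewrite -mulrA mulrC -mulrA mulr_ge0_le0 //.
    by rewrite mulr_ge0 // invr_ge0 sqr_ge0.
  rewrite mulr_ge0_le0 //; exact: sqr_ge0.
have h1x : 0 < 1 - lam * eps by lra.
have hl2s : lam ^+ 2 * s <= 12 * (lam * eps) ^+ 2.
  rewrite exprMn mulrCA; apply: ler_wpM2l => //; exact: sqr_ge0.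
have hm3' : - (3 * eps * s) <= m3 by move: hm3; rewrite ler_norml => /andP[].
have hlm3 : lam * (- (3 * eps * s)) <= lam * m3 by apply: ler_wpM2l.
have hDD : (1 - 3 * lam * eps) * s <= C * A - B ^+ 2.
  apply: le_trans hD; move: hlm3; rewrite mulrN.
  have -> : lam * (3 * eps * s) = 3 * lam * eps * s by ring.
  lra.
set Ab := (1 - lam * eps + 6 * lam ^+ 2 * eps ^+ 2) / (1 - lam * eps).
have hAb : A <= Ab.
  apply: (le_trans Aup).
  have -> : Ab = 1 + 12 * (lam * eps) ^+ 2 / (2 * (1 - lam * eps)).
    by rewrite /Ab; field; rewrite gt_eqF.
  rewrite lerD2l ler_pM2r ?invr_gt0 ?mulr_gt0 //.
have nz : 1 - lam * eps + 6 * lam ^+ 2 * eps ^+ 2 != 0.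
  have : 0 <= 6 * lam ^+ 2 * eps ^+ 2.
    by apply: mulr_ge0; [apply: mulr_ge0 => //; exact: sqr_ge0|exact: sqr_ge0].
  move=> h; rewrite gt_eqF //; lra.
have e : (1 - lam * eps) ^+ 2 * (1 - 3 * lam * eps) /
   (1 - lam * eps + 6 * lam ^+ 2 * eps ^+ 2) ^+ 2 * s =
   ((1 - 3 * lam * eps) * s) * (Ab ^+ 2)^-1.
  by rewrite /Ab; field; rewrite nz gt_eqF.
rewrite e; apply: (@le_trans _ _ (((1 - 3 * lam * eps) * s) * (A ^+ 2)^-1)).
  apply: ler_wpM2l; first by rewrite mulr_ge0 // ltW.
  rewrite lef_pV2 ?posrE ?exprn_gt0 //; last by apply: lt_le_trans hAb.
  have : 0 < A by [].
  nra.
apply: ler_wpM2r => //; by rewrite invr_ge0 exprn_ge0 // ltW.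
Qed.

Section Lin.
Context d (T : measurableType d) (R : realType) (P : probability T R).

Definition Int (f : T -> R) := P.-integrable setT (EFin \o f).

Lemma EfE f : Ef P f = Rintegral P setT f.
Proof. by []. Qed.

Lemma Int_eq f g : (forall w, f w = g w) -> Int f -> Int g.
Proof. by move=> fg; apply: eq_integrable => // w _ /=; rewrite fg. Qed.

Lemma IntZ c f : Int f -> Int (fun w => c * f w).
Proof.
move=> hf; have := integrableZl measurableT c hf.
by apply: eq_integrable => // w _ /=; rewrite EFinM.
Qed.

Lemma IntD f g : Int f -> Int g -> Int (fun w => f w + g w).
Proof.
move=> hf hg; have := integrableD measurableT hf hg.
by apply: eq_integrable => // w _ /=; rewrite EFinD.
Qed.

Lemma Int0 : Int (fun _ => 0).
Proof. by apply: eq_integrable (integrable0 _ _) => // w _. Qed.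

Fixpoint lc (s : seq ((T -> R) * R)) (w : T) : R :=
  if s is p :: s' then p.2 * p.1 w + lc s' w else 0.

Fixpoint lcE (s : seq ((T -> R) * R)) : R :=
  if s is p :: s' then p.2 * Ef P p.1 + lcE s' else 0.

Fixpoint allInt (s : seq ((T -> R) * R)) : Prop :=
  if s is p :: s' then Int p.1 /\ allInt s' else True.

Lemma Int_lc s : allInt s -> Int (lc s).
Proof.
elim: s => [|p s IH] /=; first by move=> _; exact: Int0.
by case=> h1 h2; apply: IntD; [exact: IntZ|exact: IH].
Qed.

Lemma Ef_lc s : allInt s -> Ef P (lc s) = lcE s.
Proof.
elim: s => [|p s IH] /=.
  move=> _; rewrite EfE Rintegral_cst // mul0r //.
case=> h1 h2; rewrite EfE RintegralD //; last 2 first.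
  exact: IntZ.
  exact: Int_lc.
by rewrite RintegralZl // -(IH h2).
Qed.

Lemma Ef_ge0 f : (forall w, 0 <= f w) -> 0 <= Ef P f.
Proof. by move=> h; apply: Rintegral_ge0 => w _. Qed.

Lemma Ef_1 : Ef P (fun _ => 1) = 1.
Proof. rewrite EfE Rintegral_cst // mul1r.
have h := probability_setT P.
change (fine (P setT) = 1); by rewrite h. Qed.

End Lin.


Section Var.
Context d (T : measurableType d) (R : realType) (P : probability T R).
Variable X : T -> R.
Hypothesis mX : measurable_fun setT X.
Hypothesis iX : forall k, P.-integrable setT (fun w => (X w ^+ k)%:E).
Hypothesis EX0 : Ef P X = 0.
Variable eps : R.
Hypothesis eps0 : 0 < eps.
Hypothesis bern : forall k, (3 <= k)%N ->
     `|Ef P (fun w => X w ^+ k)| <=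
       2^-1 * (k`!)%:R * eps ^+ (k - 2) * Ef P (fun w => X w ^+ 2).
Variable lam : R.
Hypothesis lam0 : 0 <= lam.

Let ex w := expR (lam * X w).
Let m k := Ef P (fun w => X w ^+ k).
Let s := m 2.
Let A := Ef P ex.
Let B := Ef P (fun w => X w * ex w).
Let C := Ef P (fun w => X w ^+ 2 * ex w).

Hypothesis iE : forall j, (j <= 2)%N -> Int P (fun w => X w ^+ j * ex w).

Let IX k : Int P (fun w => X w ^+ k) := iX k.

Let iE0 : Int P ex.
Proof. by apply: Int_eq (iE (leq0n 2)) => w; rewrite expr0 mul1r. Qed.
Let iE1 : Int P (fun w => X w * ex w).
Proof. by apply: Int_eq (iE (isT : (1 <= 2)%N)) => w; rewrite expr1. Qed.
Let iE2 : Int P (fun w => X w ^+ 2 * ex w) := iE (leqnn 2).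

Let m0 : m 0 = 1.
Proof.
rewrite /m -(Ef_1 P) !EfE; apply: eq_Rintegral => w _; exact: expr0.
Qed.
Let m1 : m 1 = 0.
Proof.
rewrite /m -EX0 !EfE; apply: eq_Rintegral => w _; exact: expr1.
Qed.

Lemma Elin_ge0 (a0 a1 a2 a3 a4 a5 a6 a7 : R) :
  (forall w, 0 <= a0 * ex w + a1 * (X w * ex w) + a2 * (X w ^+ 2 * ex w) + a3
    + a4 * X w + a5 * X w ^+ 2 + a6 * X w ^+ 3 + a7 * X w ^+ 4) ->
  0 <= a0 * A + a1 * B + a2 * C + a3 + a5 * s + a6 * m 3 + a7 * m 4.
Proof.
move=> h.
pose l := [:: (ex, a0); (fun w => X w * ex w, a1); (fun w => X w ^+ 2 * ex w, a2);
  (fun w => X w ^+ 0, a3); (fun w => X w ^+ 1, a4); (fun w => X w ^+ 2, a5);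
  (fun w => X w ^+ 3, a6); (fun w => X w ^+ 4, a7)].
have al : allInt P l.
  rewrite /l /=; split; first exact: iE0. split; first exact: iE1.
  split; first exact: iE2. by do 5 (split; first exact: IX).
have := Ef_ge0 P (f := lc l).
rewrite Ef_lc //= -/A -/B -/C.
rewrite -/(m 0) -/(m 1) -/(m 2) -/(m 3) -/(m 4) m0 m1 -/s.
have -> : a0 * A + (a1 * B + (a2 * C + (a3 * 1 + (a4 * 0 + (a5 * s + (a6 * m 3 + (a7 * m 4 + 0)))))))
  = a0 * A + a1 * B + a2 * C + a3 + a5 * s + a6 * m 3 + a7 * m 4 by ring.
apply => w /=; rewrite expr0 expr1; apply: (le_trans (h w)).
rewrite le_eqVlt; apply/orP; left; apply/eqP; ring.
Qed.

Lemma ge0_eq (x y : R) : 0 <= x -> x = y -> 0 <= y.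
Proof. by move=> h <-. Qed.

Lemma A1 : 1 <= A.
Proof.
have := @Elin_ge0 1 0 0 (-1) (- lam) 0 0 0.
have -> : 1 * A + 0 * B + 0 * C + -1 + 0 * s + 0 * m 3 + 0 * m 4 = A - 1 by ring.
rewrite subr_ge0; apply => w; apply: ge0_eq (_ : 0 <= ex w - (1 + lam * X w)) _.
  by rewrite subr_ge0 expR_ge1Dx.
ring.
Qed.

Lemma quad t : 0 <= t ^+ 2 * A - 2 * t * B + C.
Proof.
have := @Elin_ge0 (t ^+ 2) (- (2 * t)) 1 0 0 0 0 0.
have -> : t ^+ 2 * A + - (2 * t) * B + 1 * C + 0 + 0 * s + 0 * m 3 + 0 * m 4
  = t ^+ 2 * A - 2 * t * B + C by ring.
apply => w; apply: ge0_eq (_ : 0 <= (X w - t) ^+ 2 * ex w) _.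
  by rewrite mulr_ge0 ?sqr_ge0 ?expR_ge0.
ring.
Qed.

Lemma s0 : 0 <= s.
Proof.
have := @Elin_ge0 0 0 0 0 0 1 0 0.
have -> : 0 * A + 0 * B + 0 * C + 0 + 1 * s + 0 * m 3 + 0 * m 4 = s by ring.
apply => w; apply: ge0_eq (_ : 0 <= X w ^+ 2) _; first exact: sqr_ge0.
ring.
Qed.

Lemma m4ge : s ^+ 2 <= m 4.
Proof.
have := @Elin_ge0 0 0 0 (s ^+ 2) 0 (- (2 * s)) 0 1.
have -> : 0 * A + 0 * B + 0 * C + s ^+ 2 + - (2 * s) * s + 0 * m 3 + 1 * m 4
  = m 4 - s ^+ 2 by ring.
rewrite subr_ge0; apply => w; apply: ge0_eq (_ : 0 <= (X w ^+ 2 - s) ^+ 2) _.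
  exact: sqr_ge0.
ring.
Qed.

Lemma hm3 : `|m 3| <= 3 * eps * s.
Proof.
have := bern (leqnn 3); rewrite (_ : 3`! = 6)%N // (_ : (3 - 2)%N = 1)%N //.
rewrite expr1 -/(m 3) -/(m 2) -/s.
by have -> : 2^-1 * 6%:R * eps = 3 * eps :> R by field.
Qed.

Lemma hm4 : m 4 <= 12 * eps ^+ 2 * s.
Proof.
have := bern (isT : (3 <= 4)%N); rewrite (_ : 4`! = 24)%N // (_ : (4 - 2)%N = 2)%N //.
rewrite -/(m 4) -/(m 2) -/s.
have -> : 2^-1 * 24%:R * eps ^+ 2 = 12 * eps ^+ 2 :> R by field.
by apply: le_trans; rewrite ler_norm.
Qed.

Lemma s12 : s <= 12 * eps ^+ 2.
Proof.
have h := le_trans m4ge hm4.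
have [s00|sp] := eqVneq s 0.
  by rewrite s00 mulr_ge0 // sqr_ge0.
have sp' : 0 < s by rewrite lt_def sp s0.
by move: h; rewrite expr2 ler_pM2r.
Qed.

Lemma phi_ge0 u : 0 <= expR (lam * u) * u ^+ 2 * A + (- (2 * u * expR (lam * u))) * B
  + expR (lam * u) * C + (- ((1 + lam * u) * u ^+ 2)) + (- (1 + lam * u) + 2 * lam * u) * s
  + (- lam) * m 3.
Proof.
have := @Elin_ge0 (expR (lam * u) * u ^+ 2) (- (2 * u * expR (lam * u))) (expR (lam * u))
  (- ((1 + lam * u) * u ^+ 2)) (2 * u * (1 + lam * u) - lam * u ^+ 2)
  (- (1 + lam * u) + 2 * lam * u) (- lam) 0.
rewrite mul0r addr0; apply => w.
apply: ge0_eq (_ : 0 <= (u - X w) ^+ 2 *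
  (expR (lam * u) * ex w - (1 + (lam * u + lam * X w)))) _.
  rewrite mulr_ge0 ?sqr_ge0 // subr_ge0 /ex -expRD; exact: expR_ge1Dx.
ring.
Qed.

Lemma hD : s + lam * m 3 <= C * A - B ^+ 2.
Proof.
have := @Elin_ge0 C (- (2 * B)) A (- s - lam * m 3) (lam * s) (- 1) (- lam) 0.
have -> : C * A + - (2 * B) * B + A * C + (- s - lam * m 3) + -1 * s + - lam * m 3 + 0 * m 4
  = 2 * ((C * A - B ^+ 2) - (s + lam * m 3)) by ring.
rewrite pmulr_rge0 // subr_ge0; apply => w.
apply: ge0_eq (phi_ge0 (X w)) _; rewrite /ex; ring.
Qed.

End Var.

Section SumLin.
Context d (T : measurableType d) (R : realType) (P : probability T R).

Lemma Int_sumN N (f : nat -> T -> R) : (forall k, Int P (f k)) ->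
  Int P (fun w => \sum_(k < N) f k w).
Proof.
move=> h; elim: N => [|N IH].
  by apply: Int_eq (Int0 P) => w; rewrite big_ord0.
by apply: Int_eq (IntD IH (h N)) => w; rewrite big_ord_recr.
Qed.

Lemma Ef_eq f g : (forall w, f w = g w) -> Ef P f = Ef P g.
Proof. by move=> h; rewrite !EfE; apply: eq_Rintegral => w _. Qed.

Lemma EfZ c f : Int P f -> Ef P (fun w => c * f w) = c * Ef P f.
Proof. by move=> h; rewrite !EfE RintegralZl. Qed.

Lemma Ef_sumN N (f : nat -> T -> R) : (forall k, Int P (f k)) ->
  Ef P (fun w => \sum_(k < N) f k w) = \sum_(k < N) Ef P (f k).
Proof.
move=> h; elim: N => [|N IH].
  rewrite big_ord0 (@Ef_eq _ (fun _ => 0)); last by move=> w; rewrite big_ord0.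
  by rewrite EfE Rintegral_cst // mul0r.
rewrite big_ord_recr /= -IH !EfE -RintegralD //; last 2 first.
  exact: Int_sumN.
  exact: h.
by apply: eq_Rintegral => w _; rewrite big_ord_recr.
Qed.

End SumLin.


Section Ana.
Context d (T : measurableType d) (R : realType) (P : probability T R).
Variable X : T -> R.
Hypothesis mX : measurable_fun setT X.
Hypothesis iX : forall k, P.-integrable setT (fun w => (X w ^+ k)%:E).
Hypothesis EX0 : Ef P X = 0.
Variable eps : R.
Hypothesis eps0 : 0 < eps.
Hypothesis bern : forall k, (3 <= k)%N ->
     `|Ef P (fun w => X w ^+ k)| <=
       2^-1 * (k`!)%:R * eps ^+ (k - 2) * Ef P (fun w => X w ^+ 2).
Variable lam : R.
Hypothesis lam0 : 0 <= lam.
Hypothesis lx : lam * eps < 1.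

Let m k := Ef P (fun w => X w ^+ k).
Let s := m 2.
Let M := 1 + s / eps ^+ 2.

Let IX k : Int P (fun w => X w ^+ k) := iX k.

Let m0 : m 0 = 1.
Proof. by rewrite /m -(Ef_1 P); apply: Ef_eq => w; rewrite expr0. Qed.
Let m1 : m 1 = 0.
Proof. by rewrite /m -EX0; apply: Ef_eq => w; rewrite expr1. Qed.
Let s0 : 0 <= s.
Proof. by apply: Ef_ge0 => w; exact: sqr_ge0. Qed.

Lemma mom k : `|m k| <= M * k`!%:R * eps ^+ k.
Proof.
have e2 : 0 < eps ^+ 2 by rewrite exprn_gt0.
have M1 : 1 <= M by rewrite /M lerDl divr_ge0 // ltW.
case: k => [|[|[|k]]].
- by rewrite m0 normr1 fact0 expr0 !mulr1.
- rewrite m1 normr0; apply: mulr_ge0; last by rewrite exprn_ge0 // ltW.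
  apply: mulr_ge0 => //; lra.
- rewrite /= -/s ger0_norm // /M.
  rewrite (_ : 2`! = 2)%N // mulrDl mul1r mulrDl.
  have -> : s / eps ^+ 2 * 2%:R * eps ^+ 2 = 2%:R * s by field; rewrite gt_eqF.
  have : 0 <= 2%:R * eps ^+ 2 :> R by rewrite mulr_ge0 // ltW.
  have := s0; lra.
- apply: (le_trans (bern (isT : (3 <= k.+3)%N))).
  rewrite -/(m 2) -/s (_ : (k.+3 - 2)%N = k.+1) //.
  have -> : eps ^+ k.+3 = eps ^+ k.+1 * eps ^+ 2 by rewrite -exprD addn2.
  set F := (k.+3)`!%:R : R; set E1 := eps ^+ k.+1.
  have F0 : 0 <= F by [].
  have E10 : 0 <= E1 by rewrite exprn_ge0 // ltW.
  have -> : M * F * (E1 * eps ^+ 2) = F * E1 * eps ^+ 2 + F * E1 * s.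
    by rewrite /M; field; rewrite gt_eqF.
  have h1 : 0 <= F * E1 * eps ^+ 2 by rewrite !mulr_ge0 // ltW.
  have h2 : 0 <= F * E1 * s by rewrite !mulr_ge0.
  have -> : 2^-1 * F * E1 * s = 2^-1 * (F * E1 * s) by ring.
  lra.
Qed.


Lemma Sp_sum (y : R) N : series (exp_coeff y) N = \sum_(k < N) y ^+ k / k`!%:R.
Proof. by rewrite /series /exp_coeff /= big_mkord. Qed.

Lemma XS j N w : X w ^+ j * series (exp_coeff (lam * X w)) N =
  \sum_(k < N) (lam ^+ k / k`!%:R) * X w ^+ (k + j).
Proof.
rewrite Sp_sum mulr_sumr; apply: eq_bigr => k _; rewrite exprMn exprD; ring.
Qed.

Lemma Int_XS j N : Int P (fun w => X w ^+ j * series (exp_coeff (lam * X w)) N).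
Proof.
have h := Int_sumN (P := P) N (f := fun k w => (lam ^+ k / k`!%:R) * X w ^+ (k + j))
  (fun k => IntZ _ (IX (k + j))).
by apply: (Int_eq _ h) => w /=; rewrite XS.
Qed.

Lemma Ef_XS j N : Ef P (fun w => X w ^+ j * series (exp_coeff (lam * X w)) N) =
  \sum_(k < N) (lam ^+ k / k`!%:R) * m (k + j).
Proof.
rewrite (Ef_eq P (XS j N)) (@Ef_sumN _ _ _ P N (fun k w => (lam ^+ k / k`!%:R) * X w ^+ (k + j))); last by move=> k; apply: IntZ.
by apply: eq_bigr => k _; rewrite EfZ.
Qed.

Definition gN N w := (1 + X w ^+ 2) *
  (series (exp_coeff (lam * X w)) N + series (exp_coeff (- (lam * X w))) N).

Lemma gN_nice N w : gN N w = \sum_(k < N) (1 + X w ^+ 2) *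
  (((lam * X w) ^+ k + (- (lam * X w)) ^+ k) / k`!%:R).
Proof.
rewrite /gN !Sp_sum -big_split mulr_sumr; apply: eq_bigr => k _ /=; ring.
Qed.

Lemma gN_lin N w : gN N w = \sum_(k < N)
  ((lam ^+ k + (- lam) ^+ k) / k`!%:R) * (X w ^+ k + X w ^+ (k + 2)).
Proof.
rewrite gN_nice; apply: eq_bigr => k _; rewrite -mulNr !exprMn exprD; ring.
Qed.

Lemma apow_ge0 (a : R) k : 0 <= a ^+ k + (- a) ^+ k.
Proof.
rewrite exprNn -signr_odd; case: (boolP (odd k)) => h.
  by rewrite expr1 mulN1r subrr.
rewrite expr0 mul1r; have := exprn_even_ge0 a h; lra.
Qed.

Lemma gN_term_ge0 w k : 0 <= (1 + X w ^+ 2) *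
  (((lam * X w) ^+ k + (- (lam * X w)) ^+ k) / k`!%:R).
Proof.
apply: mulr_ge0; first by have := sqr_ge0 (X w); lra.
by apply: divr_ge0 => //; exact: apow_ge0.
Qed.

Lemma gN_ge0 N w : 0 <= gN N w.
Proof. by rewrite gN_nice; apply: sumr_ge0 => k _; exact: gN_term_ge0. Qed.

Lemma gN_nd w : {homo (fun N => gN N w) : n p / (n <= p)%N >-> n <= p}.
Proof.
apply/nondecreasing_seqP => N; rewrite !gN_nice big_ord_recr /= lerDl.
exact: gN_term_ge0.
Qed.

Lemma Int_gN N : Int P (gN N).
Proof.
have h := Int_sumN (P := P) N (f := fun k w => ((lam ^+ k + (- lam) ^+ k) / k`!%:R) *
   (X w ^+ k + X w ^+ (k + 2))) (fun k => IntZ _ (IntD (IX k) (IX (k + 2)))).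
by apply: (Int_eq _ h) => w /=; rewrite gN_lin.
Qed.

Lemma Ef_gN N : Ef P (gN N) = \sum_(k < N)
  ((lam ^+ k + (- lam) ^+ k) / k`!%:R) * (m k + m (k + 2)).
Proof.
rewrite (Ef_eq P (gN_lin N)) (@Ef_sumN _ _ _ P N (fun k w => ((lam ^+ k + (- lam) ^+ k) / k`!%:R) *
   (X w ^+ k + X w ^+ (k + 2)))); last by move=> k; apply: IntZ; apply: IntD.
apply: eq_bigr => k _; rewrite EfZ; last by apply: IntD.
by rewrite EfE RintegralD //; apply: IX.
Qed.


Let x0 : 0 <= lam * eps. Proof. by rewrite mulr_ge0 // ltW. Qed.

Lemma fact2 k : (k.+2)`!%:R = (k.+1 * k.+2)%:R * k`!%:R :> R.
Proof. by rewrite !factS !natrM; ring. Qed.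

Lemma gterm_le k : ((lam ^+ k + (- lam) ^+ k) / k`!%:R) * (m k + m (k + 2)) <=
  2 * M * (1 + eps ^+ 2) * ((k.+1 * k.+2)%:R * (lam * eps) ^+ k).
Proof.
set L := lam ^+ k; set E := eps ^+ k; set F := k`!%:R : R.
set K2 := (k.+1 * k.+2)%:R : R.
have F0 : 0 < F by rewrite ltr0n fact_gt0.
have L0 : 0 <= L by rewrite exprn_ge0.
have E0 : 0 <= E by rewrite exprn_ge0 // ltW.
have M0 : 0 <= M by rewrite /M addr_ge0 // divr_ge0 // ?exprn_ge0 // ltW.
have K21 : 1 <= K2 by rewrite ler1n muln_gt0.
have hc : `|(L + (- lam) ^+ k) / F| <= 2 * L / F.
  rewrite normrM normfV (gtr0_norm F0) ler_pM2r ?invr_gt0 //.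
  apply: le_trans (ler_normD _ _) _; rewrite !normrX normrN ger0_norm //.
  by rewrite /L; lra.
have h1 := mom k.
have h2 : `|m (k + 2)| <= M * (K2 * F) * (E * eps ^+ 2).
  by rewrite addn2 -fact2 -exprD addn2; exact: mom.
apply: le_trans (ler_norm _) _; rewrite normrM.
apply: (@le_trans _ _ ((2 * L / F) * (M * F * E + M * (K2 * F) * (E * eps ^+ 2)))).
  apply: ler_pM => //; apply: le_trans (ler_normD _ _) _; exact: lerD.
have -> : (2 * L / F) * (M * F * E + M * (K2 * F) * (E * eps ^+ 2)) =
  (2 * M * L * E) * (1 + K2 * eps ^+ 2) by field; rewrite gt_eqF.
have -> : 2 * M * (1 + eps ^+ 2) * (K2 * (lam * eps) ^+ k) =
  (2 * M * L * E) * ((1 + eps ^+ 2) * K2) by rewrite exprMn /L /E; ring.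
apply: ler_wpM2l; first by rewrite !mulr_ge0.
have e20 : 0 <= eps ^+ 2 by rewrite exprn_ge0 // ltW.
have : 0 <= (K2 - 1) * 1 by rewrite mulr1; lra.
nra.
Qed.

Lemma Ef_gN_le N : Ef P (gN N) <= 2 * M * (1 + eps ^+ 2) * (2 / (1 - lam * eps) ^+ 3).
Proof.
rewrite Ef_gN.
apply: (@le_trans _ _ (\sum_(k < N) 2 * M * (1 + eps ^+ 2) *
  ((k.+1 * k.+2)%:R * (lam * eps) ^+ k))).
  by apply: ler_sum => k _; exact: gterm_le.
rewrite -mulr_sumr; apply: ler_wpM2l; last exact: tri_le.
have M0 : 0 <= M by rewrite /M addr_ge0 // divr_ge0 // ?exprn_ge0 // ltW.
by rewrite !mulr_ge0 // addr_ge0 // exprn_ge0 // ltW.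
Qed.

Lemma C_part N : \sum_(k < N) (lam ^+ k / k`!%:R) * m (k + 2) <= s / (1 - lam * eps) ^+ 3.
Proof.
apply: (@le_trans _ _ (\sum_(k < N) s / 2 * ((k.+1 * k.+2)%:R * (lam * eps) ^+ k))).
  apply: ler_sum => -[[|k] _] _ /=.
    rewrite expr0 fact0 mul1n divr1 mul1r mulr1 -/s -[X in _ <= X]mulrA mulVf ?mulr1 // pnatr_eq0.
  have F0 : 0 < (k.+1)`!%:R :> R by rewrite ltr0n fact_gt0.
  have hb := bern (isT : (3 <= k.+3)%N).
  rewrite -/(m 2) -/s -/(m k.+3) /= in hb.
  rewrite addn2.
  apply: (@le_trans _ _ (lam ^+ k.+1 / (k.+1)`!%:R * (2^-1 * (k.+3)`!%:R * eps ^+ k.+1 * s))).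
    apply: ler_wpM2l; first by rewrite divr_ge0 // exprn_ge0.
    exact: le_trans (ler_norm _) hb.
  rewrite fact2 exprMn.
  rewrite le_eqVlt; apply/orP; left; apply/eqP; field; rewrite gt_eqF //.
rewrite -mulr_sumr.
have h := @tri_le _ (lam * eps) N x0 lx.
have -> : s / (1 - lam * eps) ^+ 3 = s / 2 * (2 / (1 - lam * eps) ^+ 3).
  by field; rewrite subr_eq0 eq_sym lt_eqF.
by apply: ler_wpM2l => //; rewrite divr_ge0.
Qed.


Lemma A_term i : lam ^+ i.+2 / (i.+2)`!%:R * m (i.+2 + 0) <=
  lam ^+ 2 * s / 2 * (lam * eps) ^+ i.
Proof.
rewrite addn0; case: i => [|i].
  rewrite expr0 mulr1 -/s (_ : 2`! = 2)%N //.
  by rewrite le_eqVlt; apply/orP; left; apply/eqP; field.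
have F0 : 0 < (i.+1)`!%:R :> R by rewrite ltr0n fact_gt0.
have hb := bern (isT : (3 <= i.+3)%N).
rewrite -/(m 2) -/s -/(m i.+3) /= in hb.
apply: (@le_trans _ _ (lam ^+ i.+3 / (i.+3)`!%:R * (2^-1 * (i.+3)`!%:R * eps ^+ i.+1 * s))).
  apply: ler_wpM2l; first by rewrite divr_ge0 // exprn_ge0.
  exact: le_trans (ler_norm _) hb.
have Fp : 0 < (i.+3)`!%:R :> R by rewrite ltr0n fact_gt0.
rewrite exprMn (_ : i.+3 = i.+1 + 2)%N; last by rewrite addn2.
rewrite exprD le_eqVlt; apply/orP; left; apply/eqP; field.
by rewrite gt_eqF.
Qed.

Lemma A_part N : \sum_(k < N) (lam ^+ k / k`!%:R) * m (k + 0) <=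
  1 + lam ^+ 2 * s / (2 * (1 - lam * eps)).
Proof.
have h1x : 0 < 1 - lam * eps by rewrite subr_gt0.
have Q0 : 0 <= lam ^+ 2 * s / (2 * (1 - lam * eps)).
  by rewrite divr_ge0 ?mulr_ge0 ?exprn_ge0 // ltW.
case: N => [|[|n]].
- by rewrite big_ord0; lra.
- rewrite big_ord_recl big_ord0 /= expr0 (_ : (0`!)%:R = 1 :> R) // invr1 !mul1r addr0.
  by rewrite (_ : m (0 + 0) = 1) //; lra.
rewrite -(big_mkord xpredT (fun k => lam ^+ k / k`!%:R * m (k + 0))).
rewrite !big_nat_recl //=.
rewrite expr0 (_ : (0`!)%:R = 1 :> R) // invr1 !mul1r (_ : m (0 + 0) = 1) // (_ : m (1 + 0) = 0) // mulr0 add0r.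
rewrite lerD2l.
apply: (@le_trans _ _ (\sum_(0 <= i < n) lam ^+ 2 * s / 2 * (lam * eps) ^+ i)).
  by apply: ler_sum => i _; exact: A_term.
rewrite -mulr_sumr big_mkord.
have -> : lam ^+ 2 * s / (2 * (1 - lam * eps)) = lam ^+ 2 * s / 2 * (1 - lam * eps)^-1.
  by rewrite invfM mulrA.
apply: ler_wpM2l; first by rewrite divr_ge0 // mulr_ge0 // exprn_ge0.
exact: geo_le.
Qed.


Definition G w := (1 + X w ^+ 2) * (expR (lam * X w) + expR ((- lam) * X w)).

Lemma mlX (c : R) : measurable_fun setT (fun w => c * X w).
Proof. by apply: measurable_realfun.measurable_funM => //; exact: measurable_cst. Qed.

Lemma mexp (c : R) : measurable_fun setT (fun w => expR (c * X w)).
Proof. apply: measurableT_comp => //; exact: mlX. Qed.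

Lemma mG : measurable_fun setT G.
Proof.
apply: measurable_realfun.measurable_funM.
  by apply: measurable_realfun.measurable_funD; [exact: measurable_cst|exact: measurable_realfun.measurable_funX].
by apply: measurable_realfun.measurable_funD; exact: mexp.
Qed.

Lemma G_ge0 w : 0 <= G w.
Proof.
rewrite /G mulr_ge0 // ?addr_ge0 ?expR_ge0 //.
have := sqr_ge0 (X w); lra.
Qed.

Lemma gN_cvg w : gN N w @[N --> \oo] --> G w.
Proof.
rewrite /G /gN.
apply: cvgM; first exact: cvg_cst.
apply: cvgD; first exact: is_cvg_series_exp_coeff.
rewrite mulNr; exact: is_cvg_series_exp_coeff.
Qed.

Lemma ecvg_le (u : nat -> \bar R) (l K : \bar R) :
  u n @[n --> \oo] --> l -> (forall n, (u n <= K)%E) -> (l <= K)%E.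
Proof.
move=> h hK; rewrite -(cvg_lim _ h) //; apply: lime_le; first exact: cvgP h.
exact: nearW.
Qed.

Lemma Ef_fin f : Int P f -> (\int[P]_w (f w)%:E)%E = (Ef P f)%:E.
Proof. by move=> h; rewrite /Ef fineK //; exact: integrable_fin_num h. Qed.

Lemma Int_G : Int P G.
Proof.
have h1x : 0 < 1 - lam * eps by rewrite subr_gt0.
apply/integrableP; split; first exact/measurable_realfun.measurable_EFinP/mG.
have e1 : (\int[P]_(w in setT) `|(EFin \o G) w|)%E =
  (\int[P]_(w in setT) limn (fun N => (gN N w)%:E))%E.
  apply: eq_integral => w _ /=; rewrite ger0_norm ?G_ge0 //.
  apply/esym/cvg_lim => //; apply: cvg_EFin; first exact: nearW.
  by rewrite (_ : fine \o _ = fun N => gN N w) //; exact: gN_cvg.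
rewrite e1.
have mg : forall N, measurable_fun setT (fun w => (gN N w)%:E).
  by move=> N; exact: measurable_int (Int_gN N).
have g0 : forall N w, setT w -> (0 <= (fun N w => (gN N w)%:E) N w)%E.
  by move=> N w _; rewrite lee_fin gN_ge0.
have gnd : forall w, setT w -> {homo (fun N w => (gN N w)%:E)^~ w : n p / (n <= p)%N >-> (n <= p)%E}.
  move=> w _ n p np; rewrite lee_fin; exact: gN_nd.
have hc := cvg_monotone_convergence (mu := P) measurableT mg g0 gnd.
apply: le_lt_trans.
  apply: (ecvg_le hc (K := (2 * M * (1 + eps ^+ 2) * (2 / (1 - lam * eps) ^+ 3))%:E)).
  by move=> N; rewrite Ef_fin ?lee_fin; [exact: Ef_gN_le|exact: Int_gN].
exact: ltry.
Qed.

Lemma absS (y : R) N : `|series (exp_coeff y) N| <= expR `|y|.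
Proof.
rewrite Sp_sum; apply: le_trans (ler_norm_sum _ _ _) _.
apply: (@le_trans _ _ (series (exp_coeff `|y|) N)).
  rewrite Sp_sum; apply: ler_sum => k _.
  by rewrite normrM normfV normrX (@ger0_norm _ (k`!%:R)).
apply: nondecreasing_cvgn_le; last exact: is_cvg_series_exp_coeff.
apply: nondecreasing_series => n _ _; exact: exp_coeff_ge0.
Qed.

Lemma expR_abs (y : R) : expR `|y| <= expR y + expR (- y).
Proof.
have [y0|y0] := leP 0 y.
  by rewrite ger0_norm // lerDl expR_ge0.
by rewrite ltr0_norm // lerDr expR_ge0.
Qed.

Lemma pow_le j (y : R) : (j <= 2)%N -> `|y| ^+ j <= 1 + y ^+ 2.
Proof.
have := sqr_ge0 y.
case: j => [|[|[|j]]] // h _.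
- by rewrite expr0; lra.
- rewrite expr1; have [y0|y0] := leP 0 y.
    rewrite ger0_norm //; nra.
  rewrite ltr0_norm //; nra.
- by rewrite real_normK ?num_real //; lra.
Qed.

Lemma dom1 j N w : (j <= 2)%N ->
  `|X w ^+ j * series (exp_coeff (lam * X w)) N| <= G w.
Proof.
move=> hj; rewrite normrM normrX /G; apply: ler_pM => //; first exact: pow_le.
apply: le_trans (absS _ _) _; apply: le_trans (expR_abs _) _.
by rewrite mulNr.
Qed.

Lemma dom2 j w : (j <= 2)%N -> `|X w ^+ j * expR (lam * X w)| <= G w.
Proof.
move=> hj; rewrite normrM normrX /G; apply: ler_pM => //; first exact: pow_le.
by rewrite ger0_norm ?expR_ge0 // lerDl expR_ge0.
Qed.

Lemma Int_XE j : (j <= 2)%N -> Int P (fun w => X w ^+ j * expR (lam * X w)).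
Proof.
move=> hj; apply: le_integrable Int_G => //.
  apply/measurable_EFinP; apply: measurable_funM.
    exact: measurable_funX.
  exact: mexp.
move=> w _ /=; rewrite !lee_fin (ger0_norm (G_ge0 w)); exact: dom2.
Qed.

Lemma cvg_XE j : (j <= 2)%N ->
  (Ef P (fun w => X w ^+ j * series (exp_coeff (lam * X w)) N))%:E @[N --> \oo] -->
  (Ef P (fun w => X w ^+ j * expR (lam * X w)))%:E.
Proof.
move=> hj.
have mf : forall N, measurable_fun setT
   (fun w => (X w ^+ j * series (exp_coeff (lam * X w)) N)%:E).
  by move=> N; exact: measurable_int (Int_XS j N).
have ff : forall w, setT w -> (fun N => (X w ^+ j * series (exp_coeff (lam * X w)) N)%:E)
   @ \oo --> (X w ^+ j * expR (lam * X w))%:E.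
  move=> w _; apply: cvg_EFin; first exact: nearW.
  rewrite (_ : fine \o _ = fun N => X w ^+ j * series (exp_coeff (lam * X w)) N) //.
  apply: cvgM; first exact: cvg_cst.
  exact: is_cvg_series_exp_coeff.
have fing : forall w, setT w -> (G w)%:E \is a fin_num by [].
have ab : forall N w, setT w ->
   (`|(X w ^+ j * series (exp_coeff (lam * X w)) N)%:E| <= (G w)%:E)%E.
  by move=> N w _; rewrite lee_fin; exact: dom1.
have h := dominated_cvg measurableT mf ff fing Int_G ab.
rewrite -(Ef_fin (Int_XE hj)).
rewrite (_ : (fun N => (Ef P _)%:E) = fun N =>
  (\int[P]_(w in setT) (X w ^+ j * series (exp_coeff (lam * X w)) N)%:E)%E) //.
by apply/funext => N; rewrite -Ef_fin //; exact: Int_XS.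
Qed.

Lemma XE_le j (K : R) : (j <= 2)%N ->
  (forall N, \sum_(k < N) (lam ^+ k / k`!%:R) * m (k + j) <= K) ->
  Ef P (fun w => X w ^+ j * expR (lam * X w)) <= K.
Proof.
move=> hj hK; rewrite -lee_fin; apply: ecvg_le (cvg_XE hj) _.
by move=> N; rewrite lee_fin Ef_XS.
Qed.

Lemma A_up : Ef P (fun w => expR (lam * X w)) <=
  1 + lam ^+ 2 * s / (2 * (1 - lam * eps)).
Proof.
rewrite (Ef_eq P (g := fun w => X w ^+ 0 * expR (lam * X w))); last first.
  by move=> w; rewrite expr0 mul1r.
by apply: XE_le => // N; exact: A_part.
Qed.

Lemma C_up : Ef P (fun w => X w ^+ 2 * expR (lam * X w)) <= s / (1 - lam * eps) ^+ 3.
Proof. by apply: XE_le => // N; exact: C_part. Qed.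

End Ana.


Section One.
Context d (T : measurableType d) (R : realType) (P : probability T R).
Variable X : T -> R.
Hypothesis mX : measurable_fun setT X.
Hypothesis iX : forall k, P.-integrable setT (fun w => (X w ^+ k)%:E).
Hypothesis EX0 : Ef P X = 0.
Variable eps : R.
Hypothesis eps0 : 0 < eps.
Hypothesis bern : forall k, (3 <= k)%N ->
     `|Ef P (fun w => X w ^+ k)| <=
       2^-1 * (k`!)%:R * eps ^+ (k - 2) * Ef P (fun w => X w ^+ 2).
Variable lam : R.
Hypothesis lam0 : 0 <= lam.
Hypothesis lx : lam * eps < 1.

Lemma one_var :
  (1 - lam * eps) ^+ 2 * (1 - 3 * lam * eps) /
      (1 - lam * eps + 6 * lam ^+ 2 * eps ^+ 2) ^+ 2 * Ef P (fun w => X w ^+ 2)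
  <= Ef P (fun w => X w ^+ 2 * expR (lam * X w)) / Ef P (fun w => expR (lam * X w))
     - (Ef P (fun w => X w * expR (lam * X w))) ^+ 2 /
       (Ef P (fun w => expR (lam * X w))) ^+ 2
  /\ Ef P (fun w => X w ^+ 2 * expR (lam * X w)) / Ef P (fun w => expR (lam * X w))
     - (Ef P (fun w => X w * expR (lam * X w))) ^+ 2 /
       (Ef P (fun w => expR (lam * X w))) ^+ 2
     <= Ef P (fun w => X w ^+ 2) / (1 - lam * eps) ^+ 3.
Proof.
have iE := Int_XE mX iX EX0 eps0 bern lam0 lx.
apply: final_alg => //.
- exact: (A1 iX EX0 iE).
- exact: (A_up mX iX EX0 eps0 bern lam0 lx).
- exact: (C_up mX iX EX0 eps0 bern lam0 lx).
- exact: (quad iX EX0 iE).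
- exact: (hD iX EX0 iE).
- exact: (hm3 bern).
- exact: (s0 iX EX0 iE).
- exact: (s12 iX EX0 bern iE).
Qed.

End One.

Unset Implicit Arguments.

Theorem lemma3 (d : measure_display) (T : measurableType d) (R : realType)
  (P : probability T R) (n : nat) (xi : 'I_n -> T -> R) (eps : R) :
  (forall i, measurable_fun setT (xi i)) ->
  mutually_independent P xi ->
  (forall i k, P.-integrable setT (fun w => (xi i w ^+ k)%:E)) ->
  (forall i, Ef P (xi i) = 0) ->
  0 < eps ->
  (forall i k, (3 <= k)%N ->
     `|Ef P (fun w => xi i w ^+ k)| <=
       2^-1 * (k`!)%:R * eps ^+ (k - 2) * Ef P (fun w => xi i w ^+ 2)) ->
  let sigma2 := \sum_(i < n) Ef P (fun w => xi i w ^+ 2) in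
  let sigmabar2 := fun lam : R =>
    \sum_(i < n)
      (Ef P (fun w => xi i w ^+ 2 * expR (lam * xi i w)) /
         Ef P (fun w => expR (lam * xi i w))
       - (Ef P (fun w => xi i w * expR (lam * xi i w))) ^+ 2 /
         (Ef P (fun w => expR (lam * xi i w))) ^+ 2) in
  forall lam : R, 0 <= lam -> lam < eps^-1 ->
    (1 - lam * eps) ^+ 2 * (1 - 3 * lam * eps) /
      (1 - lam * eps + 6 * lam ^+ 2 * eps ^+ 2) ^+ 2 * sigma2
      <= sigmabar2 lam
    /\ sigmabar2 lam <= sigma2 / (1 - lam * eps) ^+ 3.
Proof.
move=> mX _ iX EX0 eps0 bern sigma2 sigmabar2 lam lam0 llt.
have lx : lam * eps < 1.
  by rewrite -(ltr_pM2r eps0) mulVf ?gt_eqF in llt.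
have h i := one_var (mX i) (iX i) (EX0 i) eps0 (bern i) lam0 lx.
rewrite /sigmabar2 /sigma2; split.
  rewrite mulr_sumr; apply: ler_sum => i _; exact: (h i).1.
rewrite mulr_suml; apply: ler_sum => i _; exact: (h i).2.
Qed.
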